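(* A $3$-cochain $f\in\mathrm{Hom}_{\mathbb{Z}G}(K_3,\mathbb{k}^* )$ is a coboundary if and only if: - for all $1\le i<j\le k$ there exist $g_{i,j}\in\mathbb{k}^*$ with $f_{i,i,j}=g_{i,j}^{m_i}$ and $f_{i,j,j}=g_{i,j}^{-m_j}$; - $f_{l,l,l}=1$ for all $1\le l\le k$; - $f_{r,s,t}=1$ for all $1\le r<s<t\le k$.
   Context: Let $\mathbb{k}$ be a field and $\mathbb{k}^*$ its multiplicative group, regarded as a trivial $G$-module, where $G=\mathbb{Z}_{m_1}\times\cdots\times\mathbb{Z}_{m_k}$ with fixed generator $g_i$ of the $i$-th factor. Put $T_i=g_i-1$ and $N_i=\sum_{j=0}^{m_i-1}g_i^j$. $K_\bullet$ is the free $\mathbb{Z}G$-resolution of $\mathbb{Z}$ with $K_p$ free on generators $\Psi(a_1,\dots,a_k)$, $a_i\ge0$, $\sum a_i=p$. Its differential is $d=\sum_i d_i$, where $d_i\Psi(a)$ equals: - $0$ if $a_i=0$; - $(-1)^{\sum_{l<i}a_l}N_i\Psi(a-\epsilon_i)$ if $a_i\ne0$ is even; - $(-1)^{\sum_{l<i}a_l}T_i\Psi(a-\epsilon_i)$ if $a_i$ is odd. Cochains are $\mathrm{Hom}_{\mathbb{Z}G}(K_\bullet,\mathbb{k}^* )$ with $d^*f=f\circ d$ (written multiplicatively); $f$ is a coboundary if $f=d^*g$ for some $g\in\mathrm{Hom}_{\mathbb{Z}G}(K_2,\mathbb{k}^* )$. Notation for generators of $K_3$: $\Psi_{r,s,t}$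 ($r<s<t$) has entry $1$ in positions $r,s,t$; $\Psi_{r,r,s}$ ($r<s$) has $2$ in position $r$ and $1$ in position $s$; $\Psi_{r,s,s}$ ($r<s$) has $1$ in position $r$ and $2$ in position $s$; $\Psi_{r,r,r}$ has $3$ in position $r$; all other entries are $0$. $f_{r,s,t}$ etc. denote the values of $f$ on these generators. *)

(* Defs.v *)
From mathcomp Require Import all_boot all_order all_algebra.
Set Implicit Arguments. Unset Strict Implicit. Unset Printing Implicit Defensive.
Import Order.TTheory GRing.Theory Num.Theory.
Local Open Scope ring_scope.

(* G = Z_{m_1} x ... x Z_{m_k}; positions 1..k are indexed by 'I_k (0-based).
   An element of G is written g_1^{e_1} ... g_k^{e_k} and represented by its
   exponent vector (exponents are only meaningful mod m_i; since k^* is a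
   trivial G-module this plays no role). *)
Definition grp (k : nat) := {ffun 'I_k -> nat}.

Definition gpow (k : nat) (i : 'I_k) (j : nat) : grp k :=
  [ffun l => if l == i then j else 0%N].

(* elements of ZG as formal Z-linear combinations of group elements *)
Definition ZG (k : nat) := seq (int * grp k).

Definition Tel (k : nat) (i : 'I_k) : ZG k := [:: (1%Z, gpow i 1); (-1%Z, gpow i 0)].
Definition Nel (k : nat) (m : 'I_k -> nat) (i : 'I_k) : ZG k :=
  [seq (1%Z, gpow i j) | j <- iota 0 (m i)].
Definition ZGscale (k : nat) (c : int) (x : ZG k) : ZG k :=
  [seq (c * y.1, y.2) | y <- x].

(* Generators Psi(a_1,...,a_k) of K_p, indexed by the exponent tuple a
   (those with \sum a = p belong to K_p). *)
Definition idx (k : nat) := {ffun 'I_k -> nat}.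
Definition deg (k : nat) (a : idx k) : nat := (\sum_(i < k) a i)%N.

(* A p-cochain in Hom_{ZG}(K_p, k^* ) : since K_p is free on the Psi(a),
   it is given by its values on the generators, which lie in k^*. *)
Definition is_cochain (F : fieldType) (k p : nat) (f : idx k -> F) : Prop :=
  forall a : idx k, deg a = p -> f a != 0.

Definition act (F : fieldType) (k : nat) (h : grp k) (u : F) : F := u.

(* value of the ZG-hom f (into the trivial module k^*, written multiplicatively)
   on the element x . Psi(b) of the free module *)
Definition evalZG (F : fieldType) (k : nat) (f : idx k -> F) (x : ZG k) (b : idx k) : F :=
  \prod_(c <- x) (act c.2 (f b)) ^ c.1.

Definition decr (k : nat) (a : idx k) (i : 'I_k) : idx k :=
  [ffun l => if l == i then (a l).-1 else a l].

(* d_i Psi(a) = (coefficient in ZG, generator) *)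
Definition dcoef (k : nat) (m : 'I_k -> nat) (a : idx k) (i : 'I_k) : ZG k :=
  let s := (\sum_(l < k | (l < i)%N) a l)%N in
  if a i == 0%N then [::]
  else if ~~ odd (a i) then ZGscale ((-1) ^+ s) (Nel m i)
  else ZGscale ((-1) ^+ s) (Tel i).

Definition dstar (F : fieldType) (k : nat) (m : 'I_k -> nat) (g : idx k -> F) (a : idx k) : F :=
  \prod_(i < k) evalZG g (dcoef m a i) (decr a i).

Definition coboundary3 (F : fieldType) (k : nat) (m : 'I_k -> nat) (f : idx k -> F) : Prop :=
  exists g : idx k -> F, is_cochain 2 g /\
    forall a : idx k, deg a = 3%N -> f a = dstar m g a.

(* the generator with entry l equal to the number of occurrences of l among r,s,t:
   psi3 r s t = Psi_{r,s,t}, psi3 r r s = Psi_{r,r,s}, psi3 r s s = Psi_{r,s,s},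
   psi3 r r r = Psi_{r,r,r} *)
Definition psi3 (k : nat) (r s t : 'I_k) : idx k :=
  [ffun l => count (pred1 l) [:: r; s; t]].

(* Main.v *)
Require Import Defs.
From mathcomp Require Import all_boot all_order all_algebra.
Import GRing.Theory.
Local Open Scope ring_scope.

Section S.
Variables (F : fieldType) (k : nat) (m : 'I_k -> nat).

Lemma evalZG_T (g : idx k -> F) c i b : g b != 0 ->
  evalZG g (ZGscale c (Tel i)) b = 1.
Proof.
move=> gb; rewrite /evalZG /ZGscale /Tel /= !big_cons big_nil /act /= mulr1.
by rewrite -expfzDr // mulr1 mulrN1 subrr expr0z.
Qed.

Lemma evalZG_N (g : idx k -> F) c i b :
  evalZG g (ZGscale c (Nel m i)) b = (g b ^ c) ^+ m i.
Proof.
rewrite /evalZG /ZGscale /Nel -map_comp big_map /act /=.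
rewrite (eq_bigr (fun _ => g b ^ c)); last by move=> j _; rewrite mulr1.
have := prodr_const_nat 0 (m i) (g b ^ c); rewrite subn0 => <-.
by rewrite /index_iota subn0.
Qed.

Definition sgn (a : idx k) (i : 'I_k) : int := (-1) ^+ (\sum_(l < k | (l < i)%N) a l)%N.

Lemma factorE (g : idx k -> F) (a : idx k) i : (a i != 0%N -> g (decr a i) != 0) ->
  evalZG g (dcoef m a i) (decr a i) =
  if (a i != 0%N) && ~~ odd (a i) then (g (decr a i) ^ sgn a i) ^+ m i else 1.
Proof.
move=> Hg; rewrite /dcoef; case: eqP => [_|/eqP ai0] /=.
  by rewrite /evalZG big_nil.
case: ifP => _; first by rewrite evalZG_N.
by rewrite evalZG_T // Hg.
Qed.

Lemma le_deg (a : idx k) i : (a i <= deg a)%N.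
Proof. by rewrite /deg (bigD1 i) //= leq_addr. Qed.

Lemma deg_decr (a : idx k) i : a i != 0%N -> deg (decr a i) = (deg a).-1.
Proof.
move=> ai; rewrite /deg (bigD1 i) //= [in RHS](bigD1 i) //= ffunE eqxx.
rewrite (eq_bigr a); last by move=> l /negbTE li; rewrite ffunE li.
by case: (a i) ai.
Qed.

Lemma dstarE (g : idx k -> F) (a : idx k) : deg a = 3%N -> is_cochain 2 g ->
  dstar m g a = \prod_(i < k) if a i == 2%N then (g (decr a i) ^ sgn a i) ^+ m i else 1.
Proof.
move=> da cg; apply: eq_bigr => i _; rewrite factorE.
  have := le_deg a i; rewrite da.
  by case: (a i) => [|[|[|[|]]]].
by move=> ai; apply: cg; rewrite deg_decr // da.
Qed.

Definition e2 (i j : 'I_k) : idx k := [ffun l => count (pred1 l) [:: i; j]].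

Lemma deg_count (s : seq 'I_k) : deg [ffun l => count (pred1 l) s] = size s.
Proof.
rewrite /deg; elim: s => [|x s IH] /=.
  by rewrite big1 // => l _; rewrite ffunE.
rewrite -IH -add1n (bigD1 x) //= [X in _ = (_ + X)%N](bigD1 x) //= !ffunE /= eqxx.
rewrite addnA; congr (_ + _)%N; apply: eq_bigr => l lx; rewrite !ffunE /=.
by rewrite eq_sym (negbTE lx).
Qed.


Lemma ord_neq {i j : 'I_k} : (i < j)%N -> (i == j) = false /\ (j == i) = false.
Proof. by move=> h; split; apply/eqP => E; move: h; rewrite E ltnn. Qed.

Lemma deg_psi3 (r s t : 'I_k) : deg (psi3 r s t) = 3%N.
Proof. exact: deg_count. Qed.

Lemma deg_e2 (r s : 'I_k) : deg (e2 r s) = 2%N.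
Proof. exact: deg_count. Qed.

Lemma dstar_iij (g : idx k -> F) (i j : 'I_k) : (i < j)%N -> is_cochain 2 g ->
  dstar m g (psi3 i i j) = g (e2 i j) ^+ m i.
Proof.
move=> ij cg; have [nij nji] := ord_neq ij.
rewrite dstarE ?deg_psi3 // (bigD1 i) //= big1 ?mulr1.
  rewrite ffunE /= eqxx nji /=.
  have -> : decr (psi3 i i j) i = e2 i j.
    apply/ffunP => l; rewrite !ffunE /=.
    by case: (l =P i) => [->|/eqP li]; rewrite ?eqxx ?nji // (eq_sym i l) (negbTE li).
  have -> : sgn (psi3 i i j) i = 1.
    rewrite /sgn big1 // => l li; rewrite ffunE /=.
    have [a1 a2] := ord_neq li; have [b1 b2] := ord_neq (ltn_trans li ij).
    by rewrite a2 b2.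
  by rewrite expr1z.
move=> l /negbTE li; rewrite ffunE /=.
rewrite (eq_sym i l) li.
by case: (j == l).
Qed.

Lemma dstar_ijj (g : idx k -> F) (i j : 'I_k) : (i < j)%N -> is_cochain 2 g ->
  dstar m g (psi3 i j j) = g (e2 i j) ^ (- (m j)%:Z).
Proof.
move=> ij cg; have [nij nji] := ord_neq ij.
rewrite dstarE ?deg_psi3 // (bigD1 j) //= big1 ?mulr1.
  rewrite ffunE /= eqxx nij /=.
  have -> : decr (psi3 i j j) j = e2 i j.
    apply/ffunP => l; rewrite !ffunE /=.
    by case: (l =P j) => [->|/eqP li]; rewrite ?eqxx ?nij // (eq_sym j l) (negbTE li).
  have -> : sgn (psi3 i j j) j = -1.
    rewrite /sgn (bigD1 i) //= big1.
      by rewrite ffunE /= eqxx nji addn0 expr1.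
    move=> l /andP [lj li]; rewrite ffunE /=.
    have [a1 a2] := ord_neq lj.
    by rewrite a2 eq_sym (negbTE li).
  by rewrite exprN1 exprVn exprnN.
move=> l /negbTE li; rewrite ffunE /= (eq_sym j l) li.
by case: (i == l).
Qed.

Lemma dstar_lll (g : idx k -> F) (l : 'I_k) : is_cochain 2 g ->
  dstar m g (psi3 l l l) = 1.
Proof.
move=> cg; rewrite dstarE ?deg_psi3 // big1 // => i _; rewrite ffunE /=.
by case: (l == i).
Qed.

Lemma psi3E (r s t l : 'I_k) : psi3 r s t l = ((r == l) + (s == l) + (t == l))%N.
Proof. by rewrite ffunE /= addn0 addnA. Qed.

Lemma dstar_rst (g : idx k -> F) (r s t : 'I_k) : (r < s)%N -> (s < t)%N -> is_cochain 2 g ->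
  dstar m g (psi3 r s t) = 1.
Proof.
move=> rs st cg; rewrite dstarE ?deg_psi3 // big1 // => i _; rewrite psi3E.
case: (r =P i) => [<-|_]; first by rewrite (ord_neq rs).2 (ord_neq (ltn_trans rs st)).2.
case: (s =P i) => [<-|_]; first by rewrite (ord_neq st).2.
by case: (t == i).
Qed.

Lemma e2_inj (i j i' j' : 'I_k) : (i < j)%N -> (i' < j')%N -> e2 i' j' = e2 i j -> i' = i /\ j' = j.
Proof.
move=> ij ij' E.
have h1 := congr1 (fun f : idx k => f i) E; have h2 := congr1 (fun f : idx k => f j) E; move: h1 h2.
rewrite !ffunE /= eqxx (ord_neq ij).2 (ord_neq ij).1.
case: (i' =P i) => [e1|n1]; case: (j' =P i) => [e2|n2]; case: (i' =P j) => [e3|n3];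
  case: (j' =P j) => [e4|n4] //=; rewrite ?eqxx => h1 h2; try discriminate; try by [split].
all: exfalso; subst; rewrite ?ltnn // in ij ij'; by have := ltn_trans ij ij'; rewrite ltnn.
Qed.

Lemma classify n (a : idx k) : deg a = n -> exists s : seq 'I_k, size s = n /\ a = [ffun l => count (pred1 l) s].
Proof.
elim: n a => [|n IH] a da.
  exists [::]; split => //; apply/ffunP => l; rewrite ffunE /=.
  by apply/eqP; move: da; rewrite /deg => /eqP; rewrite sum_nat_eq0 => /forallP /(_ l).
have [i ai] : exists i, a i != 0%N.
  apply/existsP; rewrite -negb_forall; apply/negP => /forallP H.
  by move: da; rewrite /deg big1 // => l _; apply/eqP; apply: H.
have dd : deg (decr a i) = n by rewrite deg_decr // da.
have [s [ss Es]] := IH (decr a i) dd.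
exists (i :: s); split; first by rewrite /= ss.
apply/ffunP => l; rewrite ffunE /=.
have := congr1 (fun f : idx k => f l) Es; rewrite /= !ffunE => <-.
case: (l =P i) => [->|/eqP li]; first by rewrite eqxx add1n prednK // lt0n.
by rewrite eq_sym (negbTE li).
Qed.

Lemma classify3 (a : idx k) : deg a = 3%N ->
  exists r s t : 'I_k, [/\ (r <= s)%N, (s <= t)%N & a = psi3 r s t].
Proof.
move=> /classify [s [ss Es]].
pose le := fun x y : 'I_k => (x <= y)%N.
have tot : total le by move=> x y; apply: leq_total.
have so := sort_sorted tot s.
have sz := size_sort le s; rewrite ss in sz.
case E: (sort le s) so sz => [|r [|u [|t [|? ?]]]] //= so sz; try discriminate.
move: so => /andP [ru /andP [ut _]]; exists r, u, t; split => //.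
rewrite Es; apply/ffunP => l; rewrite !ffunE -E.
by apply/permP; rewrite perm_sym perm_sort.
Qed.

Lemma main_sec (f : idx k -> F) :
  coboundary3 m f <->
  [/\ (forall i j : 'I_k, (i < j)%N ->
         exists2 g : F, g != 0 &
           f (psi3 i i j) = g ^+ m i /\ f (psi3 i j j) = g ^ (- (m j)%:Z)),
      (forall l : 'I_k, f (psi3 l l l) = 1) &
      (forall r s t : 'I_k, (r < s)%N -> (s < t)%N -> f (psi3 r s t) = 1)].
Proof.
split.
  case=> g [cg Hg]; split.
  - move=> i j ij; exists (g (e2 i j)); first by apply: cg; rewrite deg_e2.
    by rewrite !Hg ?deg_psi3 // dstar_iij // dstar_ijj.
  - by move=> l; rewrite Hg ?deg_psi3 // dstar_lll.
  - by move=> r s t rs st; rewrite Hg ?deg_psi3 // dstar_rst.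
case=> H1 H2 H3.
have H1' : forall i j : 'I_k, exists g : F, (i < j)%N ==>
    (g != 0) && (f (psi3 i i j) == g ^+ m i) && (f (psi3 i j j) == g ^ (- (m j)%:Z)).
  move=> i j; case: (ltnP i j) => ij.
    by have [g gn [e1 e3]] := H1 i j ij; exists g; rewrite gn e1 e3 !eqxx.
  by exists 1.
pose G i j := xchoose (H1' i j).
have GP (i j : 'I_k) : (i < j)%N -> [&& G i j != 0, f (psi3 i i j) == G i j ^+ m i &
    f (psi3 i j j) == G i j ^ (- (m j)%:Z)].
  by move=> ij; move: (xchooseP (H1' i j)) => /implyP /(_ ij); rewrite -andbA.
pose g (b : idx k) := if [pick ij : 'I_k * 'I_k | (ij.1 < ij.2)%N && (b == e2 ij.1 ij.2)] is Some ij
  then G ij.1 ij.2 else 1.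
have ge (i j : 'I_k) : (i < j)%N -> g (e2 i j) = G i j.
  move=> ij; rewrite /g; case: pickP => [[i' j'] /= /andP [ij' /eqP E] | /(_ (i, j)) /=].
    by have [-> ->] := e2_inj _ _ _ _ ij ij' (esym E).
  by rewrite ij eqxx.
have cg : is_cochain 2 g.
  move=> b _; rewrite /g; case: pickP => [[i j] /= /andP [ij _]| _]; last exact: oner_neq0.
  by case/and3P: (GP i j ij).
exists g; split => // a da.
have [r [s [t [rs st ->]]]] := classify3 _ da.
move: rs; rewrite leq_eqVlt => /orP [/eqP/val_inj ers | rs];
  move: st; rewrite leq_eqVlt => /orP [/eqP/val_inj est | st].
- by rewrite -est -ers H2 dstar_lll.
- case/and3P: (GP s t st) => _ /eqP e1 _.
  by rewrite ers e1 dstar_iij // ge.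
- case/and3P: (GP r s rs) => _ _ /eqP e1.
  by rewrite -est e1 dstar_ijj // ge.
- by rewrite H3 // dstar_rst.
Qed.

End S.

Theorem lemma2p9 (F : fieldType) (k : nat) (m : 'I_k -> nat)
  (Hm : forall i, (0 < m i)%N) (f : idx k -> F) (Hf : is_cochain 3 f) :
  coboundary3 m f <->
  [/\ (forall i j : 'I_k, (i < j)%N ->
         exists2 g : F, g != 0 &
           f (psi3 i i j) = g ^+ m i /\ f (psi3 i j j) = g ^ (- (m j)%:Z)),
      (forall l : 'I_k, f (psi3 l l l) = 1) &
      (forall r s t : 'I_k, (r < s)%N -> (s < t)%N -> f (psi3 r s t) = 1)].
Proof. exact: main_sec. Qed.
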